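(* Let $p$ be an odd prime, $n$ a positive integer, $q=p^n$ with $q\equiv1\pmod4$, let $\xi\in\mathbb F_{q^2}\setminus\mathbb F_q$, write $x=x_0+x_1\xi$ ($x_0,x_1\in\mathbb F_q$), and let $\alpha$ be a nonsquare in $\mathbb F_q$. Let $f$ be either $f(x)=(x_0^2+\alpha x_1^{2p^i})+2x_0x_1\xi$ with $0<i<n$, or $f(x)=(x_0^{p^k+1}+\alpha x_1^{p^{k+i}+p^i})+2x_0x_1\xi$ with $0<i,k<n$ and $n/\gcd(k,n)$ odd, and let $\mathcal U_\xi:=\{(x,t\xi):x\in\mathbb F_{q^2},t\in\mathbb F_q\}\cup\{(\infty)\}$, which is a unital in $\Pi(f)$. If there is $\omega\in\mathbb F_q$ with $\omega^2-\omega+1=0$, then $\mathcal U_\xi$ contains an O'Nan configuration.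
   Context: For a planar function $f$ on $\mathbb F_{q^2}$ (i.e.\ $x\mapsto f(x+a)-f(x)$ is bijective for each $a\neq0$; both functions above are planar), $\Pi(f)$ is the projective plane with points $(x,y)\in\mathbb F_{q^2}^2$ and $(a)$ for $a\in\mathbb F_{q^2}\cup\{\infty\}$, lines $L_{a,b}=\{(x,f(x+a)-b):x\in\mathbb F_{q^2}\}\cup\{(a)\}$, $N_a=\{(a,y):y\in\mathbb F_{q^2}\}\cup\{(\infty)\}$ ($a,b\in\mathbb F_{q^2}$), $L_\infty=\{(a):a\in\mathbb F_{q^2}\cup\{\infty\}\}$. A unital is a set of $q^3+1$ points meeting every line in $1$ or $q+1$ points, regarded as a design whose blocks are its intersections with lines meeting it in $q+1$ points. An O'Nan configuration consists of four blocks, any two of which meet, such that the six pairwise intersection points are distinct. *)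

(* Defs.v *)
From mathcomp Require Import all_boot all_order all_algebra.
Set Implicit Arguments. Unset Strict Implicit. Unset Printing Implicit Defensive.
Import GRing.Theory.
Local Open Scope ring_scope.

(* Points of Pi(f) over L = F_{q^2}:
   inl (x, y)      = affine point (x, y)
   inr (Some a)    = point (a) at infinity, a in L
   inr None        = point (infinity). *)
Definition point (L : finFieldType) : finType := ((L * L) + option L)%type.

(* Line indices: inl (inl (a, b)) = L_{a,b};  inl (inr a) = N_a;  inr tt = L_infinity *)
Definition line_idx (L : finFieldType) : finType := ((L * L) + L + unit)%type.

Definition line_set (L : finFieldType) (f : L -> L) (l : line_idx L) : {set point L} :=
  match l with
  | inl (inl (a, b)) =>
      [set P : point L | match P with
                         | inl (x, y) => y == f (x + a) - b
                         | inr o => o == Some a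
                         end]
  | inl (inr a) =>
      [set P : point L | match P with
                         | inl (x, _) => x == a
                         | inr o => o == None
                         end]
  | inr _ => [set P : point L | match P with inl _ => false | inr _ => true end]
  end.

Definition inFq (L : finFieldType) (q : nat) (t : L) : bool := t ^+ q == t.

Definition U_xi (L : finFieldType) (q : nat) (xi : L) : {set point L} :=
  [set P : point L | match P with
                     | inl (x, y) => [exists t : L, inFq q t && (y == t * xi)]
                     | inr o => o == None
                     end].

Definition is_block (L : finFieldType) (f : L -> L) (q : nat) (U B : {set point L}) : Prop :=
  exists l : line_idx L, B = U :&: line_set f l /\ #|B| = q.+1.

Definition has_ONan (L : finFieldType) (f : L -> L) (q : nat) (U : {set point L}) : Prop :=
  exists (B1 B2 B3 B4 : {set point L}) (P12 P13 P14 P23 P24 P34 : point L),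
    [/\ is_block f q U B1, is_block f q U B2, is_block f q U B3 & is_block f q U B4] /\
    [/\ B1 :&: B2 = [set P12], B1 :&: B3 = [set P13] & B1 :&: B4 = [set P14]] /\
    [/\ B2 :&: B3 = [set P23], B2 :&: B4 = [set P24] & B3 :&: B4 = [set P34]] /\
    uniq [:: P12; P13; P14; P23; P24; P34].

(* Main.v *)
Set Warnings "-all".
Require Import Defs.
From mathcomp Require Import all_boot all_order all_algebra all_field.
From mathcomp Require Import ring zify.
Import GRing.Theory.
Local Open Scope ring_scope.
Set Implicit Arguments. Unset Strict Implicit.

Lemma frobD (L : finFieldType) (p m : nat) (x y : L) :
  prime p -> p \in [char L] -> (x + y) ^+ (p ^ m) = x ^+ (p ^ m) + y ^+ (p ^ m).
Proof.
move=> pp hc; apply: exprDn_pchar.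
rewrite (eq_pnat _ (pcharf_eq hc)) pnatX pnat_id //.
Qed.

Lemma oddX_neg (L : finFieldType) (e : nat) (x : L) : odd e -> (- x) ^+ e = - x ^+ e.
Proof. by move=> he; rewrite exprNn -signr_odd he expr1 mulN1r. Qed.

Lemma frobN (L : finFieldType) (p m : nat) (x : L) :
  odd p -> (- x) ^+ (p ^ m) = - x ^+ (p ^ m).
Proof. by move=> hp; apply: oddX_neg; rewrite oddX hp orbT. Qed.

Lemma frobB (L : finFieldType) (p m : nat) (x y : L) :
  prime p -> odd p -> p \in [char L] -> (x - y) ^+ (p ^ m) = x ^+ (p ^ m) - y ^+ (p ^ m).
Proof. by move=> pp op hc; rewrite frobD // frobN. Qed.

Lemma frob_inj (L : finFieldType) (p m : nat) (x y : L) :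
  prime p -> odd p -> p \in [char L] -> x ^+ (p ^ m) = y ^+ (p ^ m) -> x = y.
Proof.
move=> pp op hc h; apply/eqP; rewrite -subr_eq0.
have : (x - y) ^+ (p ^ m) == 0 by rewrite frobB // h subrr.
by rewrite expf_eq0 expn_gt0 prime_gt0.
Qed.

Lemma two_neq0 (L : finFieldType) (p : nat) : odd p -> p \in [char L] -> (2%:R : L) != 0.
Proof.
move=> op hc; apply/negP => /eqP h2.
have h2c : (2%N \in [char L]) by apply/andP; split => //; apply/eqP.
by move: h2c; rewrite (pcharf_eq hc) inE => /eqP h; rewrite -h in op.
Qed.


Lemma inFq_add (L : finFieldType) p n (x y : L) : prime p -> p \in [char L] ->
  inFq (p ^ n) x -> inFq (p ^ n) y -> inFq (p ^ n) (x + y).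
Proof. by move=> pp hc /eqP hx /eqP hy; apply/eqP; rewrite frobD // hx hy. Qed.

Lemma inFq_opp (L : finFieldType) p n (x : L) : odd p ->
  inFq (p ^ n) x -> inFq (p ^ n) (- x).
Proof. by move=> op /eqP hx; apply/eqP; rewrite frobN // hx. Qed.

Lemma inFq_sub (L : finFieldType) p n (x y : L) : prime p -> odd p -> p \in [char L] ->
  inFq (p ^ n) x -> inFq (p ^ n) y -> inFq (p ^ n) (x - y).
Proof. by move=> pp op hc hx hy; apply: inFq_add => //; apply: inFq_opp. Qed.

Lemma inFq_mul (L : finFieldType) q (x y : L) :
  inFq q x -> inFq q y -> inFq q (x * y).
Proof. by move=> /eqP hx /eqP hy; apply/eqP; rewrite exprMn hx hy. Qed.

Lemma inFq_inv (L : finFieldType) q (x : L) : inFq q x -> inFq q (x^-1).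
Proof. by move=> /eqP hx; apply/eqP; rewrite exprVn hx. Qed.

Lemma inFq_div (L : finFieldType) q (x y : L) :
  inFq q x -> inFq q y -> inFq q (x / y).
Proof. by move=> hx hy; apply: inFq_mul => //; apply: inFq_inv. Qed.

Lemma inFq_exp (L : finFieldType) q (x : L) e : inFq q x -> inFq q (x ^+ e).
Proof. by move=> /eqP hx; apply/eqP; rewrite exprAC hx. Qed.

Lemma inFq_nat (L : finFieldType) p n (k : nat) : prime p -> p \in [char L] ->
  inFq (p ^ n) (k%:R : L).
Proof.
move=> pp hc; have hq : (0 < p ^ n)%N by rewrite expn_gt0 prime_gt0.
elim: k => [|k IH]; first by rewrite /inFq mulr0n expr0n eqn0Ngt hq.
by rewrite -addn1 natrD; apply: inFq_add => //; apply/eqP; rewrite expr1n.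
Qed.

Lemma qq_id (L : finFieldType) p n (x : L) : #|L| = ((p ^ n) ^ 2)%N ->
  (x ^+ (p ^ n)) ^+ (p ^ n) = x.
Proof. by move=> hL; rewrite -exprM mulnn -hL expf_card. Qed.

Definition cp1 {L : finFieldType} (q : nat) (th x : L) := (x - x ^+ q) / (th - th ^+ q).
Definition cp0 {L : finFieldType} (q : nat) (th x : L) := x - cp1 q th x * th.

Lemma cp_spec (L : finFieldType) p n (th x : L) : prime p -> odd p -> p \in [char L] ->
  #|L| = ((p ^ n) ^ 2)%N -> ~~ inFq (p ^ n) th ->
  [/\ inFq (p ^ n) (cp0 (p ^ n) th x), inFq (p ^ n) (cp1 (p ^ n) th x)
    & x = cp0 (p ^ n) th x + cp1 (p ^ n) th x * th].
Proof.
move=> pp op hc hL hth.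
have hd : th - th ^+ (p ^ n) != 0 by rewrite subr_eq0 eq_sym.
have h1 : inFq (p ^ n) (cp1 (p ^ n) th x).
  apply/eqP; rewrite /cp1 exprMn exprVn !frobB // !qq_id //.
  by rewrite -[x ^+ _ - x]opprB -[th ^+ _ - th]opprB invrN mulrNN.
split => //; last by rewrite /cp0 subrK.
apply/eqP; rewrite /cp0 frobB // exprMn (eqP h1).
have e : cp1 (p ^ n) th x * (th - th ^+ (p ^ n)) = x - x ^+ (p ^ n).
  by rewrite /cp1 divfK.
set c := cp1 (p ^ n) th x in e *.
have ex : x ^+ (p ^ n) = x - c * (th - th ^+ (p ^ n)) by rewrite e opprB addrC subrK.
by rewrite ex; ring.
Qed.


Lemma cp_uniq (L : finFieldType) p n (th a b : L) : prime p -> odd p -> p \in [char L] ->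
  ~~ inFq (p ^ n) th -> inFq (p ^ n) a -> inFq (p ^ n) b -> a + b * th = 0 -> a = 0 /\ b = 0.
Proof.
move=> pp op hc hth ha hb h.
have h' : b * th = - a by apply/eqP; rewrite -addr_eq0 addrC h.
have hb0 : b = 0.
  apply/eqP; apply/negPn/negP => hb0; move/negP: hth; apply.
  have -> : th = - a / b by rewrite -h' [b * th]mulrC mulfK.
  by apply: inFq_div => //; apply: inFq_opp.
split => //; move: h'; rewrite hb0 mul0r => /eqP; rewrite eq_sym oppr_eq0 => /eqP //.
Qed.

Lemma cp_eq (L : finFieldType) p n (th a b a' b' : L) : prime p -> odd p -> p \in [char L] ->
  ~~ inFq (p ^ n) th -> inFq (p ^ n) a -> inFq (p ^ n) b -> inFq (p ^ n) a' -> inFq (p ^ n) b' ->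
  a + b * th = a' + b' * th -> a = a' /\ b = b'.
Proof.
move=> pp op hc hth ha hb ha' hb' h.
have [] := @cp_uniq L p n th (a - a') (b - b') pp op hc hth.
- by apply: inFq_sub.
- by apply: inFq_sub.
- by rewrite mulrBl addrACA h -opprD subrr.
by move=> /eqP; rewrite subr_eq0 => /eqP -> /eqP; rewrite subr_eq0 => /eqP ->.
Qed.

Lemma inFq_iter (L : finFieldType) q (t : L) m : inFq q t -> t ^+ (q ^ m) = t.
Proof.
move=> /eqP h; elim: m => [|m IH]; first by rewrite expn0 expr1.
by rewrite expnSr exprM IH h.
Qed.

Lemma tau_odd (L : finFieldType) p n k (t : L) : prime p -> odd p -> p \in [char L] ->
  (0 < n)%N -> odd (n %/ gcdn k n) -> inFq (p ^ n) t -> t ^+ (p ^ k) = - t -> t = 0.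
Proof.
move=> pp op hc hn hodd ht htau.
have it : forall j, t ^+ (p ^ (k * j)) = (-1) ^+ j * t.
  elim=> [|j IH]; first by rewrite muln0 expn0 expr1 expr0 mul1r.
  rewrite mulnS expnD [(p ^ k * _)%N]mulnC exprM IH exprMn htau -exprM.
  rewrite -[(-1) ^+ (j * _)]signr_odd oddM oddX op orbT andbT signr_odd exprS.
  by rewrite mulrN mulN1r mulNr.
have hg : (0 < gcdn k n)%N by rewrite gcdn_gt0 hn orbT.
have e : (k * (n %/ gcdn k n) = n * (k %/ gcdn k n))%N.
  by rewrite muln_divA ?dvdn_gcdr // muln_divA ?dvdn_gcdl // [(k * n)%N]mulnC.
have := it (n %/ gcdn k n)%N; rewrite e expnM inFq_iter // -signr_odd hodd expr1 mulN1r.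
move=> /eqP; rewrite -addr_eq0 -mulr2n -mulr_natr mulf_eq0 => /orP [/eqP //|].
by move=> h2; move: (two_neq0 op hc); rewrite h2.
Qed.

Lemma roots_lt {L : finFieldType} (P : {poly L}) : P != 0 -> (#|[set x | root P x]| < size P)%N.
Proof.
move=> hP; rewrite cardE; apply: max_poly_roots => //; last exact: enum_uniq.
by apply/allP => x; rewrite mem_enum inE.
Qed.

Lemma rootsXn_le (L : finFieldType) m (c : L) : (0 < m)%N -> (#|[set x | x ^+ m == c]| <= m)%N.
Proof.
move=> hm.
have hP : ('X^m - c%:P : {poly L}) != 0.
  by rewrite -size_poly_eq0 size_XnsubC.
have := roots_lt hP; rewrite size_XnsubC // ltnS.
apply: leq_trans; apply: subset_leq_card; apply/subsetP => x.
by rewrite !inE rootE !hornerE subr_eq0.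
Qed.

Lemma norm_inFq (L : finFieldType) p n (w : L) : #|L| = ((p ^ n) ^ 2)%N ->
  inFq (p ^ n) (w ^+ (p ^ n).+1).
Proof. by move=> hL; apply/eqP; rewrite exprAC exprS qq_id // exprS mulrC. Qed.

Lemma norm_fiber (L : finFieldType) p n (c : L) : prime p -> odd p -> p \in [char L] ->
  (0 < n)%N -> #|L| = ((p ^ n) ^ 2)%N -> inFq (p ^ n) c -> c != 0 ->
  #|[set w | w ^+ (p ^ n).+1 == c]| = (p ^ n).+1.
Proof.
move=> pp op hc hn hL hcq hc0.
have hq : (1 < p ^ n)%N.
  by rewrite -(expn0 p) ltn_exp2l ?prime_gt1.
set q := (p ^ n)%N in hq hL hcq *.
pose S := [set d : L | inFq q d && (d != 0)].
have hS : (#|S| <= q.-1)%N.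
  have := @rootsXn_le L q.-1 1; rewrite -subn1 subn_gt0 => /(_ hq).
  apply: leq_trans; apply: subset_leq_card; apply/subsetP => d.
  rewrite !inE => /andP [/eqP hd hd0].
  have : d ^+ q = d ^+ (q - 1) * d by rewrite -exprSr subn1 prednK // ltnW.
  rewrite hd => /eqP; rewrite -{1}[d]mul1r eq_sym => /eqP /mulIf h.
  by rewrite -h.
have hF : forall d, (#|[set w : L | w ^+ q.+1 == d]| <= q.+1)%N.
  by move=> d; apply: rootsXn_le.
have hsum : #|[set~ (0 : L)]| = (\sum_(d in S) #|[set w : L | w ^+ q.+1 == d]|)%N.
  rewrite -sum1_card (partition_big (fun w : L => w ^+ q.+1) (mem S)) /=.
    apply: eq_bigr => d; rewrite inE => /andP [_ hd0].
    rewrite -sum1_card; apply: eq_bigl => w; rewrite !inE.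
    case: (eqVneq w 0) => [->|//]; rewrite expr0n /=.
    by apply/esym/negbTE; rewrite eq_sym.
  move=> w; rewrite !inE => hw; rewrite norm_inFq // expf_neq0 //.
have hcS : c \in S by rewrite inE hcq hc0.
move: hsum; rewrite cardsC1 hL (bigD1 c) //=.
have hrest : (\sum_(d in S | d != c) #|[set w : L | w ^+ q.+1 == d]| <= (#|S|.-1) * q.+1)%N.
  apply: (@leq_trans (\sum_(d in S | d != c) q.+1)); first by apply: leq_sum => d _; apply: hF.
  rewrite (eq_bigl (fun d => d \in [predD1 S & c])); last by move=> d; rewrite !inE andbC.
  rewrite sum_nat_const leq_mul2r; apply/orP; right.
  by rewrite (cardD1 c S) hcS.
move: hrest (hF c) hS; move: (#|[set w : L | w ^+ q.+1 == c]|) (#|S|) => F s.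
move: (\sum_(_ | _) _)%N => b h1 h2 h3 h4; clearbody q; nia.
Qed.

Lemma norm_surj (L : finFieldType) p n (c : L) : prime p -> odd p -> p \in [char L] ->
  (0 < n)%N -> #|L| = ((p ^ n) ^ 2)%N -> inFq (p ^ n) c -> c != 0 ->
  exists w : L, w ^+ (p ^ n).+1 = c.
Proof.
move=> pp op hc hn hL hcq hc0.
have := norm_fiber pp op hc hn hL hcq hc0.
case: (set_0Vmem [set w : L | w ^+ (p ^ n).+1 == c]) => [->|[w]]; first by rewrite cards0.
by rewrite inE => /eqP h _; exists w.
Qed.

Lemma sqrt_Fq (L : finFieldType) p n (c : L) : prime p -> odd p -> p \in [char L] ->
  (0 < n)%N -> #|L| = ((p ^ n) ^ 2)%N -> (p ^ n %% 4 = 1)%N -> inFq (p ^ n) c -> c != 0 ->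
  exists z : L, z ^+ 2 = c /\ (c ^+ ((p ^ n) %/ 4 * 2) = 1 -> inFq (p ^ n) z).
Proof.
move=> pp op hc hn hL h4 hcq hc0.
have [w hw] := norm_surj pp op hc hn hL hcq hc0.
set q := (p ^ n)%N in h4 hw hcq *.
set r := (q %/ 4)%N.
have hqr : q = (r * 4 + 1)%N by rewrite /r {1}(divn_eq q 4) h4.
exists (w ^+ (r * 2).+1); split.
  by rewrite -exprM -hw hqr; congr (_ ^+ _); lia.
move=> hc1; apply/eqP.
rewrite [X in _ ^+ X = _]hqr exprD expr1 -exprM.
have -> : ((r * 2).+1 * (r * 4))%N = ((r * 4 + 1).+1 * (r * 2))%N by lia.
by rewrite exprM -hqr hw hc1 mul1r.
Qed.

Lemma i_exists (L : finFieldType) p n : prime p -> odd p -> p \in [char L] ->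
  (0 < n)%N -> #|L| = ((p ^ n) ^ 2)%N -> (p ^ n %% 4 = 1)%N ->
  exists i : L, inFq (p ^ n) i /\ i ^+ 2 = -1.
Proof.
move=> pp op hc hn hL h4.
have [] := @sqrt_Fq L p n (-1) pp op hc hn hL h4.
- by apply: inFq_opp => //; apply/eqP; rewrite expr1n.
- by rewrite oppr_eq0 oner_eq0.
move=> z [hz hz1]; exists z; split => //; apply: hz1.
by rewrite mulnC exprM sqrrN expr1n expr1n.
Qed.

Lemma delta_exists (L : finFieldType) p n (alpha : L) : prime p -> odd p -> p \in [char L] ->
  (0 < n)%N -> #|L| = ((p ^ n) ^ 2)%N -> (p ^ n %% 4 = 1)%N ->
  inFq (p ^ n) alpha ->
  ~ (exists beta : L, inFq (p ^ n) beta /\ beta ^+ 2 = alpha) ->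
  exists d : L, [/\ d ^+ 2 = - alpha, d ^+ (p ^ n) = - d & ~~ inFq (p ^ n) d].
Proof.
move=> pp op hc hn hL h4 ha hns.
have ha0 : alpha != 0.
  apply/negP => /eqP a0; apply: hns; exists 0; split; last by rewrite a0 expr0n.
  exact: (@inFq_nat L p n 0 pp hc).
have [i [hi hi2]] := i_exists pp op hc hn hL h4.
have [] := @sqrt_Fq L p n (- alpha) pp op hc hn hL h4.
- by apply: inFq_opp.
- by rewrite oppr_eq0.
move=> d [hd _].
have hdq : ~~ inFq (p ^ n) d.
  apply/negP => hdq; apply: hns; exists (i * d); split; first exact: inFq_mul.
  by rewrite exprMn hi2 hd mulN1r opprK.
exists d; split => //.
have : (d ^+ (p ^ n)) ^+ 2 = d ^+ 2.
  rewrite exprAC hd; apply/eqP; rewrite -[X in _ == X](eqP (inFq_opp op ha)) //.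
move=> /eqP; rewrite -subr_eq0 subr_sqr mulf_eq0 => /orP [|].
  by rewrite subr_eq0 => /eqP h; move: hdq; rewrite /inFq h eqxx.
by rewrite addr_eq0 => /eqP.
Qed.

Lemma pow3_mod4 m : (3 ^ m %% 4 = if odd m then 3 else 1)%N.
Proof.
elim: m => [//|m IH]; rewrite expnS -modnMmr IH /=.
by case: (odd m).
Qed.

Lemma pk_mod4 p n k : odd p -> (p ^ n %% 4 = 1)%N -> (0 < n)%N ->
  odd (n %/ gcdn k n) -> (p ^ k %% 4 = 1)%N.
Proof.
move=> op h4 hn hodd.
have hp2 : (p %% 2 = 1)%N by rewrite modn2 op.
have : (p %% 4 = 1 \/ p %% 4 = 3)%N by lia.
case=> hp4.
  by rewrite -modnXm hp4 exp1n.
move: h4; rewrite -modnXm hp4 pow3_mod4 -modnXm hp4 pow3_mod4.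
case hn2: (odd n) => // _.
case hk: (odd k) => //.
have hg : odd (gcdn k n).
  have /dvdnP [m hm] := dvdn_gcdl k n.
  by move: hk; rewrite {1}hm oddM => /andP [].
have hnn : n = (n %/ gcdn k n * gcdn k n)%N by rewrite divnK // dvdn_gcdr.
by move: hn2; rewrite {1}hnn oddM hodd hg.
Qed.

Definition psi {L : finFieldType} (p k : nat) (u : L) := u ^+ ((p ^ k).+1 %/ 2).

Lemma psi_sq (L : finFieldType) p k (u : L) : odd p -> psi p k u ^+ 2 = u ^+ (p ^ k).+1.
Proof.
move=> op; rewrite /psi -exprM divnK // dvdn2 /= oddX op orbT //.
Qed.

Lemma psi_exp_odd p k : (p ^ k %% 4 = 1)%N -> odd ((p ^ k).+1 %/ 2).
Proof.
move=> h; have : (((p ^ k).+1 %/ 2) %% 2 = 1)%N by move: h; move: (p ^ k)%N => x; lia.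
by rewrite modn2; case: odd.
Qed.

Lemma psi_inFq (L : finFieldType) q p k (u : L) : inFq q u -> inFq q (psi p k u).
Proof. by move=> h; apply: inFq_exp. Qed.

Lemma psi_inj (L : finFieldType) p n k (u v : L) : prime p -> odd p -> p \in [char L] ->
  (0 < n)%N -> (p ^ n %% 4 = 1)%N -> odd (n %/ gcdn k n) ->
  inFq (p ^ n) u -> inFq (p ^ n) v -> psi p k u = psi p k v -> u = v.
Proof.
move=> pp op hc hn h4 hodd hu hv.
have hm := psi_exp_odd (pk_mod4 op h4 hn hodd).
set m := ((p ^ k).+1 %/ 2)%N in hm.
have hm0 : (0 < m)%N by case: m hm.
rewrite /psi -/m.
case: (eqVneq v 0) => [->|hv0].
  by rewrite expr0n eqn0Ngt hm0 /= => /eqP; rewrite expf_eq0 hm0 /= => /eqP.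
move=> e.
set z := u / v.
have hz : z ^+ m = 1 by rewrite /z exprMn e exprVn mulfV // expf_neq0.
have hzq : inFq (p ^ n) z by apply: inFq_div.
have hz0 : z != 0 by apply/negP => /eqP z0; move: hz; rewrite z0 expr0n eqn0Ngt hm0 /= => /eqP; rewrite eq_sym oner_eq0.
have hz2 : z ^+ (p ^ k).+1 = 1.
  by rewrite -(@psi_sq L p k z op) /psi -/m hz expr1n.
have hzt : z ^+ (p ^ k) = z^-1.
  by apply: (mulIf hz0); rewrite mulVf // -exprSr.
have ht : (z - z^-1) ^+ (p ^ k) = - (z - z^-1).
  by rewrite frobB // hzt exprVn hzt invrK opprB.
have := tau_odd pp op hc hn hodd (inFq_sub pp op hc hzq (inFq_inv hzq)) ht.
move=> /eqP; rewrite subr_eq0 => /eqP hzz.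
have : (z - 1) * (z + 1) = 0.
  by rewrite -subr_sqr expr2 {2}hzz mulfV // expr1n subrr.
move=> /eqP; rewrite mulf_eq0 => /orP [|].
  by rewrite subr_eq0 => /eqP z1; rewrite -[u](divfK hv0) -/z z1 mul1r.
rewrite addr_eq0 => /eqP zm1.
move: hz; rewrite zm1 -signr_odd hm expr1.
by move=> h; move: (two_neq0 op hc); rewrite mulr2n -{1}h addNr eqxx.
Qed.

Lemma norm_delta (L : finFieldType) p n (d alpha s t : L) : prime p -> odd p -> p \in [char L] ->
  d ^+ 2 = - alpha -> d ^+ (p ^ n) = - d -> inFq (p ^ n) s -> inFq (p ^ n) t ->
  (s + t * d) ^+ (p ^ n).+1 = s ^+ 2 + alpha * t ^+ 2.
Proof.
move=> pp op hc hd hdq /eqP hs /eqP ht.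
rewrite exprSr frobD // exprMn hs ht hdq.
have -> : (s + t * - d) * (s + t * d) = s ^+ 2 - t ^+ 2 * d ^+ 2 by ring.
by rewrite hd; ring.
Qed.

Lemma inFq_1 (L : finFieldType) q : inFq q (1 : L).
Proof. by apply/eqP; rewrite expr1n. Qed.

Ltac fq := repeat first [ assumption | apply: inFq_1 | apply: inFq_nat | apply: inFq_add | apply: inFq_opp | apply: inFq_mul
  | apply: inFq_exp | apply: inFq_inv | apply: inFq_nat ].

Definition Pset {L : finFieldType} (q : nat) (f : L -> L) (xi a b : L) : {set L} :=
  [set x | [exists t, inFq q t && (f (x + a) - b == t * xi)]].

Lemma block_count (L : finFieldType) p n i k (f : L -> L) (xi alpha d a b0 b1 : L) :
  prime p -> odd p -> p \in [char L] -> (0 < n)%N -> #|L| = ((p ^ n) ^ 2)%N ->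
  (p ^ n %% 4 = 1)%N -> odd (n %/ gcdn k n) -> ~~ inFq (p ^ n) xi ->
  inFq (p ^ n) alpha ->
  (forall x0 x1 : L, inFq (p ^ n) x0 -> inFq (p ^ n) x1 ->
        f (x0 + x1 * xi) =
          (x0 ^+ (p ^ k + 1) + alpha * x1 ^+ (p ^ (k + i) + p ^ i))
          + 2%:R * x0 * x1 * xi) ->
  d ^+ 2 = - alpha -> d ^+ (p ^ n) = - d -> ~~ inFq (p ^ n) d ->
  inFq (p ^ n) b0 -> inFq (p ^ n) b1 -> b0 != 0 ->
  #|Pset (p ^ n) f xi a (b0 + b1 * xi)| = (p ^ n).+1.
Proof.
move=> pp op hc hn hL h4 hodd hxi ha hf hd hdq hdn hb0 hb1 hb00.
set q := (p ^ n)%N.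
pose u0 x := cp0 q xi (x + a).
pose u1 x := cp1 q xi (x + a).
have hu x : [/\ inFq q (u0 x), inFq q (u1 x) & x + a = u0 x + u1 x * xi].
  exact: cp_spec.
pose Phi x := psi p k (u0 x) + psi p k (u1 x ^+ (p ^ i)) * d.
have hPhi x : Phi x ^+ q.+1 = u0 x ^+ (p ^ k + 1) + alpha * u1 x ^+ (p ^ (k + i) + p ^ i).
  have [h0 h1 _] := hu x.
  rewrite /Phi (norm_delta _ _ _ hd) //.
  - rewrite !psi_sq // -exprM addn1; congr (_ + _ * (_ ^+ _)).
    by rewrite mulnS expnD [(p ^ i * _)%N]mulnC addnC.
  - exact: (@psi_inFq L q p k _ h0).
  - exact: (@psi_inFq L q p k _ (inFq_exp _ h1)).
have hP x : (x \in Pset q f xi a (b0 + b1 * xi)) = (Phi x ^+ q.+1 == b0).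
  have [h0 h1 hx] := hu x.
  rewrite inE hx hf // hPhi.
  apply/existsP/eqP.
  - case=> t /andP [ht /eqP e].
    have [] := @cp_uniq L p n xi (u0 x ^+ (p ^ k + 1) + alpha * u1 x ^+ (p ^ (k + i) + p ^ i) - b0)
        (2%:R * u0 x * u1 x - b1 - t) pp op hc hxi; try fq.
      have e' := e; move/eqP: e'; rewrite -subr_eq0 => /eqP e'.
      by rewrite -e'; ring.
    by move=> /eqP; rewrite subr_eq0 => /eqP.
  - move=> e; exists (2%:R * u0 x * u1 x - b1); rewrite andbC; apply/andP; split; last by fq.
    by rewrite e; apply/eqP; ring.
have hinj : injective Phi.
  move=> x y e.
  have [hx0 hx1 hx] := hu x; have [hy0 hy1 hy] := hu y.
  have [e0 e1] := @cp_eq L p n d _ _ _ _ pp op hc hdn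
    (@psi_inFq L q p k _ hx0) (@psi_inFq L q p k _ (inFq_exp _ hx1))
    (@psi_inFq L q p k _ hy0) (@psi_inFq L q p k _ (inFq_exp _ hy1)) e.
  have e0' := psi_inj pp op hc hn h4 hodd hx0 hy0 e0.
  have e1' := psi_inj pp op hc hn h4 hodd (inFq_exp _ hx1) (inFq_exp _ hy1) e1.
  have e1'' := frob_inj pp op hc e1'.
  by apply: (addIr a); rewrite hx hy e0' e1''.
have -> : Pset q f xi a (b0 + b1 * xi) = Phi @^-1: [set w | w ^+ q.+1 == b0].
  by apply/setP => x; rewrite hP !inE.
by rewrite card_preimset // norm_fiber.
Qed.

Lemma block_card_eq (L : finFieldType) q (f : L -> L) (xi a b : L) :
  #|U_xi q xi :&: line_set f (inl (inl (a, b)))| = #|Pset q f xi a b|.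
Proof.
have inj : injective (fun x : L => (inl (x, f (x + a) - b) : point L)).
  by move=> x y [].
rewrite -(card_imset _ inj).
have -> : U_xi q xi :&: line_set f (inl (inl (a, b))) =
   (fun x : L => (inl (x, f (x + a) - b) : point L)) @: Pset q f xi a b; last by [].
apply/setP => z; rewrite !inE.
case: z => [[x y]|o] /=.
- apply/idP/imsetP.
  + case/andP => hU /eqP hy; exists x => //; first by rewrite inE -hy.
    by rewrite hy.
  + case=> x' hx' [-> ->]; move: hx'; rewrite !inE => ->; by rewrite eqxx.
- apply/idP/imsetP.
  + by case/andP => /eqP -> .
  + by case.
Qed.

Lemma inter2 (L : finFieldType) q (f : L -> L) (xi a a' b b' x y : L) :
  (forall x', f (x' + a) - b = f (x' + a') - b' -> x' = x) ->
  y = f (x + a) - b -> y = f (x + a') - b' -> (inl (x, y) : point L) \in U_xi q xi ->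
  a != a' ->
  (U_xi q xi :&: line_set f (inl (inl (a, b)))) :&: (U_xi q xi :&: line_set f (inl (inl (a', b'))))
  = [set (inl (x, y) : point L)].
Proof.
move=> hu hy hy' hU haa.
apply/setP => z; rewrite !inE.
case: z => [[x' y']|o] /=.
- apply/idP/idP.
  + case/and3P => /andP [_ /eqP e1] _ /eqP e2.
    have ex := hu x' (etrans (esym e1) e2).
    by rewrite ex -hy in e1; rewrite e1 ex.
  + move/eqP => [-> ->]; move: hU; rewrite inE => ->.
    by rewrite -hy -hy' eqxx.
- by case: o.
Qed.

Lemma gdiff (L : finFieldType) p k (s : L) : prime p -> odd p -> p \in [char L] ->
  (s + 1) ^+ (p ^ k + 1) - (s - 1) ^+ (p ^ k + 1) = 2%:R * (s + s ^+ (p ^ k)).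
Proof.
move=> pp op hc.
rewrite !exprD !expr1 frobD // frobB // expr1n.
ring.
Qed.

Lemma e2_split (L : finFieldType) p k i (t : L) :
  t ^+ (p ^ (k + i) + p ^ i) = (t ^+ (p ^ i)) ^+ (p ^ k + 1).
Proof. by rewrite -exprM mulnDr muln1 -expnD [(i + k)%N]addnC. Qed.

Lemma gflat (L : finFieldType) p n k (s : L) : prime p -> odd p -> p \in [char L] ->
  (0 < n)%N -> odd (n %/ gcdn k n) -> inFq (p ^ n) s ->
  (s + 1) ^+ (p ^ k + 1) = (s - 1) ^+ (p ^ k + 1) -> s = 0.
Proof.
move=> pp op hc hn hodd hs e.
have := gdiff k s pp op hc; rewrite e subrr => /eqP; rewrite eq_sym mulf_eq0.
rewrite (negbTE (two_neq0 op hc)) /= addr_eq0 => /eqP h.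
apply: (tau_odd pp op hc hn hodd hs); by rewrite {2}h opprK.
Qed.

Lemma hflat (L : finFieldType) p n k i (t : L) : prime p -> odd p -> p \in [char L] ->
  (0 < n)%N -> odd (n %/ gcdn k n) -> inFq (p ^ n) t ->
  (t + 1) ^+ (p ^ (k + i) + p ^ i) = (t - 1) ^+ (p ^ (k + i) + p ^ i) -> t = 0.
Proof.
move=> pp op hc hn hodd ht e.
have : t ^+ (p ^ i) = 0.
  apply: (gflat pp op hc hn hodd (inFq_exp _ ht)).
  by move: e; rewrite !e2_split frobD // frobB // expr1n.
by move/eqP; rewrite expf_eq0 => /andP [_ /eqP].
Qed.

Lemma cross (L : finFieldType) p n k i (alpha x : L) : prime p -> odd p -> p \in [char L] ->
  (0 < n)%N -> odd (n %/ gcdn k n) -> inFq (p ^ n) x -> inFq (p ^ n) alpha ->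
  ~ (exists beta : L, inFq (p ^ n) beta /\ beta ^+ 2 = alpha) ->
  (x + 1) ^+ (p ^ k + 1) - (x - 1) ^+ (p ^ k + 1) =
    alpha * ((x + 1) ^+ (p ^ (k + i) + p ^ i) - (x - 1) ^+ (p ^ (k + i) + p ^ i)) -> x = 0.
Proof.
move=> pp op hc hn hodd hx ha hns e.
set w := x + x ^+ (p ^ k).
have hw : inFq (p ^ n) w by rewrite /w; fq.
have ew : w = alpha * w ^+ (p ^ i).
  move: e; rewrite !e2_split frobD // frobB // expr1n gdiff // gdiff //.
  rewrite /w frobD // -!exprM ?[(p ^ i * p ^ k)%N]mulnC => h; apply: (mulfI (two_neq0 op hc)); rewrite h; ring.
have w0 : w = 0.
  apply/eqP; apply/negPn/negP => w0; apply: hns.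
  have wi0 : w ^+ (p ^ i) != 0 by rewrite expf_neq0.
  exists (psi p i w / w ^+ (p ^ i)); split; first by apply: inFq_div; fq; exact: psi_inFq.
  rewrite expr_div_n psi_sq // exprS {1}ew.
  by field.
apply: (tau_odd pp op hc hn hodd hx).
by apply/eqP; rewrite -addr_eq0 addrC -/w w0.
Qed.

Lemma line_split (L : finFieldType) p n k i (f : L -> L) (xi alpha x0 x1 a0 a1 a0' a1' be be' c : L) :
  prime p -> odd p -> p \in [char L] -> ~~ inFq (p ^ n) xi -> inFq (p ^ n) alpha ->
  (forall x0 x1 : L, inFq (p ^ n) x0 -> inFq (p ^ n) x1 ->
        f (x0 + x1 * xi) =
          (x0 ^+ (p ^ k + 1) + alpha * x1 ^+ (p ^ (k + i) + p ^ i))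
          + 2%:R * x0 * x1 * xi) ->
  inFq (p ^ n) x0 -> inFq (p ^ n) x1 -> inFq (p ^ n) a0 -> inFq (p ^ n) a1 ->
  inFq (p ^ n) a0' -> inFq (p ^ n) a1' -> inFq (p ^ n) be -> inFq (p ^ n) be' -> inFq (p ^ n) c ->
  f ((x0 + x1 * xi) + (a0 + a1 * xi)) - (c + be * xi) =
  f ((x0 + x1 * xi) + (a0' + a1' * xi)) - (c + be' * xi) ->
  (x0 + a0) ^+ (p ^ k + 1) + alpha * (x1 + a1) ^+ (p ^ (k + i) + p ^ i) =
  (x0 + a0') ^+ (p ^ k + 1) + alpha * (x1 + a1') ^+ (p ^ (k + i) + p ^ i) /\
  2%:R * (x0 + a0) * (x1 + a1) - be = 2%:R * (x0 + a0') * (x1 + a1') - be'.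
Proof.
move=> pp op hc hxi ha hf hx0 hx1 ha0 ha1 ha0' ha1' hbe hbe' hcq.
have ex : forall b0 b1, (x0 + x1 * xi) + (b0 + b1 * xi) = (x0 + b0) + (x1 + b1) * xi.
  by move=> b0 b1; ring.
rewrite !ex !hf; try fq.
move=> e.
have [] := @cp_eq L p n xi
  ((x0 + a0) ^+ (p ^ k + 1) + alpha * (x1 + a1) ^+ (p ^ (k + i) + p ^ i) - c)
  (2%:R * (x0 + a0) * (x1 + a1) - be)
  ((x0 + a0') ^+ (p ^ k + 1) + alpha * (x1 + a1') ^+ (p ^ (k + i) + p ^ i) - c)
  (2%:R * (x0 + a0') * (x1 + a1') - be') pp op hc hxi; try fq.
  have e1 : forall A B C D : L, A + B - (C + D) = A - C + (B - D) by move=> *; ring.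
  move: e; rewrite !e1 -!mulrBl //.
move=> h1 h2; split => //.
by apply: (addIr (- c)).
Qed.

Lemma even_pow1 (L : finFieldType) (s : L) e : s ^+ 2 = 1 -> ~~ odd e -> s ^+ e = 1.
Proof.
move=> hs he; have -> : e = (e./2 * 2)%N by rewrite muln2 even_halfK.
by rewrite mulnC exprM hs expr1n.
Qed.

Lemma even_powN (L : finFieldType) (s : L) e : ~~ odd e -> (- s) ^+ e = s ^+ e.
Proof. by move=> he; rewrite exprNn -signr_odd (negbTE he) expr0 mul1r. Qed.

Lemma e1_even p k : odd p -> ~~ odd (p ^ k + 1).
Proof. by move=> op; rewrite addn1 /= oddX op orbT. Qed.

Lemma e2_even p k i : odd p -> ~~ odd (p ^ (k + i) + p ^ i).
Proof. by move=> op; rewrite oddD !oddX op !orbT. Qed.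

Lemma f_unit (L : finFieldType) p n k i (f : L -> L) (xi alpha s0 s1 : L) :
  prime p -> odd p -> p \in [char L] ->
  (forall x0 x1 : L, inFq (p ^ n) x0 -> inFq (p ^ n) x1 ->
        f (x0 + x1 * xi) =
          (x0 ^+ (p ^ k + 1) + alpha * x1 ^+ (p ^ (k + i) + p ^ i))
          + 2%:R * x0 * x1 * xi) ->
  inFq (p ^ n) s0 -> inFq (p ^ n) s1 -> s0 ^+ 2 = 1 -> s1 ^+ 2 = 1 ->
  f (s0 + s1 * xi) = (1 + alpha) + 2%:R * s0 * s1 * xi.
Proof.
move=> pp op hc hf h0 h1 e0 e1.
rewrite hf // (@even_pow1 L s0 (p ^ k + 1) e0) ?e1_even //.
by rewrite (@even_pow1 L s1 (p ^ (k + i) + p ^ i) e1) ?e2_even // mulr1.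
Qed.

Lemma lin4 (L : finFieldType) p (l r z : L) : odd p -> p \in [char L] ->
  l = r -> 4%:R * z = l - r -> z = 0.
Proof.
move=> op hc e hz; move: hz; rewrite e subrr => /eqP.
rewrite mulf_eq0 => /orP [|/eqP //].
by rewrite (_ : 4%:R = 2%:R * 2%:R :> L) ?mulf_eq0 ?(negbTE (two_neq0 op hc)) // -natrM.
Qed.

Lemma alpha_cancel (L : finFieldType) (alpha A B C : L) : alpha != 0 ->
  A + alpha * B = A + alpha * C -> B = C.
Proof. by move=> ha /addrI /(mulfI ha). Qed.

Lemma pair01 (L : finFieldType) p n k i (alpha x0 x1 : L) : prime p -> odd p -> p \in [char L] ->
  (0 < n)%N -> odd (n %/ gcdn k n) -> inFq (p ^ n) x0 -> inFq (p ^ n) x1 -> inFq (p ^ n) alpha ->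
  ~ (exists beta : L, inFq (p ^ n) beta /\ beta ^+ 2 = alpha) ->
  (x0 + 1) ^+ (p ^ k + 1) + alpha * (x1 + 1) ^+ (p ^ (k + i) + p ^ i) =
  (x0 + -1) ^+ (p ^ k + 1) + alpha * (x1 + -1) ^+ (p ^ (k + i) + p ^ i) ->
  2%:R * (x0 + 1) * (x1 + 1) - - 2%:R = 2%:R * (x0 + -1) * (x1 + -1) - - 2%:R ->
  x0 = 0 /\ x1 = 0.
Proof.
move=> pp op hc hn hodd hx0 hx1 ha hns eR eI.
have hs : x0 + x1 = 0 by apply: (lin4 op hc eI); ring.
have hx : x1 = - x0 by apply/eqP; rewrite -addr_eq0 addrC hs.
have z0 : x0 = 0.
  apply: (@cross L p n k i alpha x0 pp op hc hn hodd hx0 ha hns).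
  have n1 : forall e, ~~ odd e -> (- x0 + 1) ^+ e = (x0 + -1) ^+ e.
    by move=> e he; rewrite -(even_powN _ he) opprD opprK addrC.
  have n2 : forall e, ~~ odd e -> (- x0 + -1) ^+ e = (x0 + 1) ^+ e.
    by move=> e he; rewrite -(even_powN _ he) opprD ?opprK.
  move: eR; rewrite hx n1 ?e2_even // n2 ?e2_even // => eR.
  move: eR; set A := (x0 + 1) ^+ _; set B := (x0 + -1) ^+ (p ^ k + 1).
  set C := (x0 + 1) ^+ (p ^ (k + i) + p ^ i); set D := (x0 + -1) ^+ (p ^ (k + i) + p ^ i).
  move=> eR; apply/eqP; rewrite -subr_eq0; apply/eqP.
  have -> : A - B - alpha * (C - D) = (A + alpha * D) - (B + alpha * C) by ring.
  by rewrite eR subrr.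
by split => //; rewrite hx z0 oppr0.
Qed.

Lemma pair23 (L : finFieldType) p n k i (alpha x0 x1 : L) : prime p -> odd p -> p \in [char L] ->
  (0 < n)%N -> odd (n %/ gcdn k n) -> inFq (p ^ n) x0 -> inFq (p ^ n) x1 -> inFq (p ^ n) alpha ->
  ~ (exists beta : L, inFq (p ^ n) beta /\ beta ^+ 2 = alpha) ->
  (x0 + 1) ^+ (p ^ k + 1) + alpha * (x1 + -1) ^+ (p ^ (k + i) + p ^ i) =
  (x0 + -1) ^+ (p ^ k + 1) + alpha * (x1 + 1) ^+ (p ^ (k + i) + p ^ i) ->
  2%:R * (x0 + 1) * (x1 + -1) - 2%:R = 2%:R * (x0 + -1) * (x1 + 1) - 2%:R ->
  x0 = 0 /\ x1 = 0.
Proof.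
move=> pp op hc hn hodd hx0 hx1 ha hns eR eI.
have hs : x1 - x0 = 0 by apply: (lin4 op hc eI); ring.
have hx : x1 = x0 by apply/eqP; rewrite -subr_eq0 hs.
have z0 : x0 = 0.
  apply: (@cross L p n k i alpha x0 pp op hc hn hodd hx0 ha hns).
  move: eR; rewrite hx.
  set A := (x0 + 1) ^+ _; set B := (x0 + -1) ^+ (p ^ k + 1).
  set C := (x0 + 1) ^+ (p ^ (k + i) + p ^ i); set D := (x0 + -1) ^+ (p ^ (k + i) + p ^ i).
  move=> eR; apply/eqP; rewrite -subr_eq0; apply/eqP.
  have -> : A - B - alpha * (C - D) = (A + alpha * D) - (B + alpha * C) by ring.
  by rewrite eR subrr.
by split => //; rewrite hx z0.
Qed.

Lemma pair02 (L : finFieldType) p n k i (alpha x0 x1 : L) : prime p -> odd p -> p \in [char L] ->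
  (0 < n)%N -> odd (n %/ gcdn k n) -> inFq (p ^ n) x0 -> inFq (p ^ n) x1 -> alpha != 0 ->
  (x0 + 1) ^+ (p ^ k + 1) + alpha * (x1 + 1) ^+ (p ^ (k + i) + p ^ i) =
  (x0 + 1) ^+ (p ^ k + 1) + alpha * (x1 + -1) ^+ (p ^ (k + i) + p ^ i) ->
  2%:R * (x0 + 1) * (x1 + 1) - - 2%:R = 2%:R * (x0 + 1) * (x1 + -1) - 2%:R ->
  x0 = - 2%:R /\ x1 = 0.
Proof.
move=> pp op hc hn hodd hx0 hx1 ha eR eI.
have z1 : x1 = 0 by apply: (hflat pp op hc hn hodd hx1 (alpha_cancel ha eR)).
split => //; apply/eqP; rewrite -addr_eq0; apply/eqP.
by apply: (lin4 op hc eI); ring.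
Qed.

Lemma pair03 (L : finFieldType) p n k i (alpha x0 x1 : L) : prime p -> odd p -> p \in [char L] ->
  (0 < n)%N -> odd (n %/ gcdn k n) -> inFq (p ^ n) x0 -> inFq (p ^ n) x1 ->
  (x0 + 1) ^+ (p ^ k + 1) + alpha * (x1 + 1) ^+ (p ^ (k + i) + p ^ i) =
  (x0 + -1) ^+ (p ^ k + 1) + alpha * (x1 + 1) ^+ (p ^ (k + i) + p ^ i) ->
  2%:R * (x0 + 1) * (x1 + 1) - - 2%:R = 2%:R * (x0 + -1) * (x1 + 1) - 2%:R ->
  x0 = 0 /\ x1 = - 2%:R.
Proof.
move=> pp op hc hn hodd hx0 hx1 eR eI.
have z0 : x0 = 0 by apply: (gflat pp op hc hn hodd hx0 (addIr _ eR)).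
split => //; apply/eqP; rewrite -addr_eq0; apply/eqP.
by apply: (lin4 op hc eI); ring.
Qed.

Lemma pair12 (L : finFieldType) p n k i (alpha x0 x1 : L) : prime p -> odd p -> p \in [char L] ->
  (0 < n)%N -> odd (n %/ gcdn k n) -> inFq (p ^ n) x0 -> inFq (p ^ n) x1 ->
  (x0 + -1) ^+ (p ^ k + 1) + alpha * (x1 + -1) ^+ (p ^ (k + i) + p ^ i) =
  (x0 + 1) ^+ (p ^ k + 1) + alpha * (x1 + -1) ^+ (p ^ (k + i) + p ^ i) ->
  2%:R * (x0 + -1) * (x1 + -1) - - 2%:R = 2%:R * (x0 + 1) * (x1 + -1) - 2%:R ->
  x0 = 0 /\ x1 = 2%:R.
Proof.
move=> pp op hc hn hodd hx0 hx1 eR eI.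
have z0 : x0 = 0 by apply: (gflat pp op hc hn hodd hx0 (esym (addIr _ eR))).
split => //; apply/eqP; rewrite -subr_eq0; apply/eqP.
by apply: (lin4 op hc (esym eI)); ring.
Qed.

Lemma pair13 (L : finFieldType) p n k i (alpha x0 x1 : L) : prime p -> odd p -> p \in [char L] ->
  (0 < n)%N -> odd (n %/ gcdn k n) -> inFq (p ^ n) x0 -> inFq (p ^ n) x1 -> alpha != 0 ->
  (x0 + -1) ^+ (p ^ k + 1) + alpha * (x1 + -1) ^+ (p ^ (k + i) + p ^ i) =
  (x0 + -1) ^+ (p ^ k + 1) + alpha * (x1 + 1) ^+ (p ^ (k + i) + p ^ i) ->
  2%:R * (x0 + -1) * (x1 + -1) - - 2%:R = 2%:R * (x0 + -1) * (x1 + 1) - 2%:R ->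
  x0 = 2%:R /\ x1 = 0.
Proof.
move=> pp op hc hn hodd hx0 hx1 ha eR eI.
have z1 : x1 = 0 by apply: (hflat pp op hc hn hodd hx1 (esym (alpha_cancel ha eR))).
split => //; apply/eqP; rewrite -subr_eq0; apply/eqP.
by apply: (lin4 op hc (esym eI)); ring.
Qed.

Lemma neq_by (L : finFieldType) (u v w : L) : w != 0 -> u - v = w -> u != v.
Proof. by move=> hw e; rewrite -subr_eq0 e. Qed.

Lemma pt_neq_x (L : finFieldType) (x y x' y' : L) : x != x' -> (inl (x, y) : point L) != inl (x', y').
Proof. by apply: contra => /eqP [->]. Qed.

Lemma pt_neq_y (L : finFieldType) (x y x' y' : L) : y != y' -> (inl (x, y) : point L) != inl (x', y').
Proof. by apply: contra => /eqP [_ ->]. Qed.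

Lemma uniq6 (T : eqType) (a b c d e g : T) :
  a != b -> a != c -> a != d -> a != e -> a != g ->
  b != c -> b != d -> b != e -> b != g ->
  c != d -> c != e -> c != g -> d != e -> d != g -> e != g ->
  uniq [:: a; b; c; d; e; g].
Proof.
move=> *; rewrite /= !inE !negb_or.
by repeat (apply/andP; split).
Qed.

Unset Implicit Arguments.
Set Strict Implicit.
Theorem theorem3p15 (p n : nat) (L : finFieldType) (xi alpha : L) (f : L -> L) :
  prime p -> odd p -> (0 < n)%N ->
  #|L| = ((p ^ n) ^ 2)%N ->
  ((p ^ n) %% 4 = 1)%N ->
  ~~ inFq (p ^ n) xi ->
  inFq (p ^ n) alpha ->
  ~ (exists beta : L, inFq (p ^ n) beta /\ beta ^+ 2 = alpha) ->
  ((exists i : nat, (0 < i < n)%N /\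
      forall x0 x1 : L, inFq (p ^ n) x0 -> inFq (p ^ n) x1 ->
        f (x0 + x1 * xi) =
          (x0 ^+ 2 + alpha * x1 ^+ (2 * p ^ i)) + 2%:R * x0 * x1 * xi)
   \/
   (exists i k : nat, (0 < i < n)%N /\ (0 < k < n)%N /\ odd (n %/ gcdn k n) /\
      forall x0 x1 : L, inFq (p ^ n) x0 -> inFq (p ^ n) x1 ->
        f (x0 + x1 * xi) =
          (x0 ^+ (p ^ k + 1) + alpha * x1 ^+ (p ^ (k + i) + p ^ i))
          + 2%:R * x0 * x1 * xi)) ->
  (exists omega : L, inFq (p ^ n) omega /\ omega ^+ 2 - omega + 1 = 0) ->
  has_ONan f (p ^ n) (U_xi (p ^ n) xi).
Proof.
move=> pp op hn hL h4 hxi ha hns hfam _.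
have hc : p \in [char L].
  by apply: (@card_finPcharP L p (n * 2)) => //; rewrite hL expnM.
have [i [k [hodd hf]]] : exists i k, odd (n %/ gcdn k n) /\
   forall x0 x1 : L, inFq (p ^ n) x0 -> inFq (p ^ n) x1 ->
     f (x0 + x1 * xi) = (x0 ^+ (p ^ k + 1) + alpha * x1 ^+ (p ^ (k + i) + p ^ i))
       + 2%:R * x0 * x1 * xi.
  case: hfam => [[i [_ hf1]]|[i [k [_ [_ [hodd hf2]]]]]].
  - exists i, 0%N; split; first by rewrite gcd0n divnn hn.
    move=> x0 x1 h0 h1; rewrite hf1 //.
    have -> : (p ^ (0 + i) + p ^ i = 2 * p ^ i)%N by rewrite add0n mul2n addnn.
    by have -> : (p ^ 0 + 1 = 2)%N by rewrite expn0.
  - by exists i, k.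
have [d [hd hdq hdn]] := delta_exists pp op hc hn hL h4 ha hns.
have [io [hio hio2]] := i_exists pp op hc hn hL h4.
have h2 := two_neq0 op hc.
have ha0 : alpha != 0.
  apply/negP => /eqP a0; apply: hns; exists 0; split; last by rewrite a0 expr0n.
  exact: (@inFq_nat L p n 0 pp hc).
pose c := 1 + alpha.
have hcq : inFq (p ^ n) c by rewrite /c; fq.
have hc0 : c != 0.
  apply/negP => /eqP c0; apply: hns; exists io; split => //.
  by rewrite hio2; apply/eqP; rewrite eq_sym -addr_eq0 addrC -/c c0.
have hxi0 : xi != 0.
  by apply: contra hxi => /eqP ->; exact: (@inFq_nat L p n 0 pp hc).
have hxi1 : xi - 1 != 0.
  by apply: contra hxi; rewrite subr_eq0 => /eqP ->; exact: inFq_1.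
have hxi2 : xi + 1 != 0.
  apply: contra hxi; rewrite addr_eq0 => /eqP ->; apply: inFq_opp => //; exact: inFq_1.
have hm1 : inFq (p ^ n) (-1 : L) by fq.
have hp1 : inFq (p ^ n) (1 : L) by fq.
have hpm2 : inFq (p ^ n) (2%:R : L) by fq.
have hmm2 : inFq (p ^ n) (- 2%:R : L) by fq.
pose U := U_xi (p ^ n) xi.
pose Bl a b := U :&: line_set f (inl (inl (a, b))).
have hblk : forall a0 a1 be, inFq (p ^ n) a0 -> inFq (p ^ n) a1 -> inFq (p ^ n) be ->
    is_block f (p ^ n) U (Bl (a0 + a1 * xi) (c + be * xi)).
  move=> a0 a1 be h0 h1 hb; exists (inl (inl (a0 + a1 * xi, c + be * xi))); split => //.
  by rewrite /Bl /U block_card_eq (block_count (a0 + a1 * xi) pp op hc hn hL h4 hodd hxi ha hf hd hdq hdn hcq hb hc0).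
have huniq : forall a0 a1 a0' a1' be be' X,
    inFq (p ^ n) a0 -> inFq (p ^ n) a1 -> inFq (p ^ n) a0' -> inFq (p ^ n) a1' ->
    inFq (p ^ n) be -> inFq (p ^ n) be' ->
    (forall x0 x1, inFq (p ^ n) x0 -> inFq (p ^ n) x1 ->
      (x0 + a0) ^+ (p ^ k + 1) + alpha * (x1 + a1) ^+ (p ^ (k + i) + p ^ i) =
      (x0 + a0') ^+ (p ^ k + 1) + alpha * (x1 + a1') ^+ (p ^ (k + i) + p ^ i) ->
      2%:R * (x0 + a0) * (x1 + a1) - be = 2%:R * (x0 + a0') * (x1 + a1') - be' ->
      x0 + x1 * xi = X) ->
    forall x', f (x' + (a0 + a1 * xi)) - (c + be * xi) =
               f (x' + (a0' + a1' * xi)) - (c + be' * xi) -> x' = X.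
  move=> a0 a1 a0' a1' be be' X h0 h1 h0' h1' hb hb' H x' e.
  have [g0 g1 gx] := cp_spec x' pp op hc hL hxi.
  rewrite gx in e *.
  have [eR eI] := line_split pp op hc hxi ha hf g0 g1 h0 h1 h0' h1' hb hb' hcq e.
  exact: H.
have hyv : forall X a0 a1 be s0 s1 Y, inFq (p ^ n) s0 -> inFq (p ^ n) s1 ->
    s0 ^+ 2 = 1 -> s1 ^+ 2 = 1 ->
    X + (a0 + a1 * xi) = s0 + s1 * xi -> Y = (2%:R * s0 * s1 - be) * xi ->
    Y = f (X + (a0 + a1 * xi)) - (c + be * xi).
  move=> X a0 a1 be s0 s1 Y h0 h1 e0 e1 eX eY.
  by rewrite eX (f_unit pp op hc hf h0 h1 e0 e1) eY /c; ring.
have hUm : forall X t, inFq (p ^ n) t -> (inl (X, t * xi) : point L) \in U.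
  by move=> X t ht; rewrite inE; apply/existsP; exists t; rewrite ht eqxx.
have sq1 : (1 : L) ^+ 2 = 1 by rewrite expr1n.
have sqm1 : (-1 : L) ^+ 2 = 1 by rewrite sqrrN expr1n.
have h4q : inFq (p ^ n) (4%:R : L) by fq.
have hm4q : inFq (p ^ n) (- 4%:R : L) by fq.
have h0q : inFq (p ^ n) (0 : L) by exact: (@inFq_nat L p n 0 pp hc).
pose A0 := 1 + 1 * xi. pose B0 := c + (- 2%:R) * xi.
pose A1 := -1 + (-1) * xi. pose B1 := c + (- 2%:R) * xi.
pose A2 := 1 + (-1) * xi. pose B2 := c + 2%:R * xi.
pose A3 := -1 + 1 * xi. pose B3 := c + 2%:R * xi.
pose Q01 : point L := inl (0, 4%:R * xi).
pose Q02 : point L := inl (- 2%:R, 0 * xi).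
pose Q03 : point L := inl (- 2%:R * xi, 0 * xi).
pose Q12 : point L := inl (2%:R * xi, 0 * xi).
pose Q13 : point L := inl (2%:R, 0 * xi).
pose Q23 : point L := inl (0, (- 4%:R) * xi).
exists (Bl A0 B0), (Bl A1 B1), (Bl A2 B2), (Bl A3 B3), Q01, Q02, Q03, Q12, Q13, Q23.
split; first by split; apply: hblk.
have I01 : Bl A0 B0 :&: Bl A1 B1 = [set Q01].
  apply: inter2.
  - apply: huniq; try fq.
    move=> x0 x1 g0 g1 eR eI; have [-> ->] := pair01 pp op hc hn hodd g0 g1 ha hns eR eI.
    by rewrite mul0r addr0.
  - by apply: (hyv _ _ _ _ 1 1) => //; rewrite /c; ring.
  - by apply: (hyv _ _ _ _ (-1) (-1)) => //; rewrite /c; ring.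
  - by apply: hUm; fq.
  - apply: (@neq_by _ _ _ (2%:R * (xi + 1))); last by rewrite /A0 /A1; ring.
    by rewrite ?oppr_eq0 ?mulf_neq0 ?oppr_eq0.
have I02 : Bl A0 B0 :&: Bl A2 B2 = [set Q02].
  apply: inter2.
  - apply: huniq; try fq.
    move=> x0 x1 g0 g1 eR eI; have [-> ->] := pair02 pp op hc hn hodd g0 g1 ha0 eR eI.
    by rewrite mul0r addr0.
  - by apply: (hyv _ _ _ _ (-1) 1) => //; rewrite /c; ring.
  - by apply: (hyv _ _ _ _ (-1) (-1)) => //; rewrite /c; ring.
  - by apply: hUm; fq.
  - apply: (@neq_by _ _ _ (2%:R * xi)); last by rewrite /A0 /A2; ring.
    by rewrite ?oppr_eq0 ?mulf_neq0 ?oppr_eq0.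
have I03 : Bl A0 B0 :&: Bl A3 B3 = [set Q03].
  apply: inter2.
  - apply: huniq; try fq.
    move=> x0 x1 g0 g1 eR eI; have [-> ->] := pair03 pp op hc hn hodd g0 g1 eR eI.
    by rewrite add0r.
  - by apply: (hyv _ _ _ _ 1 (-1)) => //; rewrite /c; ring.
  - by apply: (hyv _ _ _ _ (-1) (-1)) => //; rewrite /c; ring.
  - by apply: hUm; fq.
  - apply: (@neq_by _ _ _ (2%:R)); last by rewrite /A0 /A3; ring.
    by rewrite ?oppr_eq0 ?mulf_neq0 ?oppr_eq0.
have I12 : Bl A1 B1 :&: Bl A2 B2 = [set Q12].
  apply: inter2.
  - apply: huniq; try fq.
    move=> x0 x1 g0 g1 eR eI; have [-> ->] := pair12 pp op hc hn hodd g0 g1 eR eI.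
    by rewrite add0r.
  - by apply: (hyv _ _ _ _ (-1) 1) => //; rewrite /c; ring.
  - by apply: (hyv _ _ _ _ 1 1) => //; rewrite /c; ring.
  - by apply: hUm; fq.
  - apply: (@neq_by _ _ _ (- 2%:R)); last by rewrite /A1 /A2; ring.
    by rewrite ?oppr_eq0 ?mulf_neq0 ?oppr_eq0.
have I13 : Bl A1 B1 :&: Bl A3 B3 = [set Q13].
  apply: inter2.
  - apply: huniq; try fq.
    move=> x0 x1 g0 g1 eR eI; have [-> ->] := pair13 pp op hc hn hodd g0 g1 ha0 eR eI.
    by rewrite mul0r addr0.
  - by apply: (hyv _ _ _ _ 1 (-1)) => //; rewrite /c; ring.
  - by apply: (hyv _ _ _ _ 1 1) => //; rewrite /c; ring.
  - by apply: hUm; fq.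
  - apply: (@neq_by _ _ _ (- 2%:R * xi)); last by rewrite /A1 /A3; ring.
    by rewrite ?oppr_eq0 ?mulf_neq0 ?oppr_eq0.
have I23 : Bl A2 B2 :&: Bl A3 B3 = [set Q23].
  apply: inter2.
  - apply: huniq; try fq.
    move=> x0 x1 g0 g1 eR eI; have [-> ->] := pair23 pp op hc hn hodd g0 g1 ha hns eR eI.
    by rewrite mul0r addr0.
  - by apply: (hyv _ _ _ _ 1 (-1)) => //; rewrite /c; ring.
  - by apply: (hyv _ _ _ _ (-1) 1) => //; rewrite /c; ring.
  - by apply: hUm; fq.
  - apply: (@neq_by _ _ _ (- 2%:R * (xi - 1))); last by rewrite /A2 /A3; ring.
    by rewrite ?oppr_eq0 ?mulf_neq0 ?oppr_eq0.
split; first by split.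
split; first by split.
rewrite /Q01 /Q02 /Q03 /Q12 /Q13 /Q23.
apply: uniq6.
- apply: pt_neq_y; apply: (@neq_by _ _ _ (2%:R * (2%:R * xi))); last by ring.
  by rewrite ?oppr_eq0 ?mulf_neq0 ?oppr_eq0.
- apply: pt_neq_y; apply: (@neq_by _ _ _ (2%:R * (2%:R * xi))); last by ring.
  by rewrite ?oppr_eq0 ?mulf_neq0 ?oppr_eq0.
- apply: pt_neq_y; apply: (@neq_by _ _ _ (2%:R * (2%:R * xi))); last by ring.
  by rewrite ?oppr_eq0 ?mulf_neq0 ?oppr_eq0.
- apply: pt_neq_y; apply: (@neq_by _ _ _ (2%:R * (2%:R * xi))); last by ring.
  by rewrite ?oppr_eq0 ?mulf_neq0 ?oppr_eq0.
- apply: pt_neq_y; apply: (@neq_by _ _ _ (2%:R * (2%:R * (2%:R * xi)))); last by ring.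
  by rewrite ?oppr_eq0 ?mulf_neq0 ?oppr_eq0.
- apply: pt_neq_x; apply: (@neq_by _ _ _ (2%:R * (xi - 1))); last by ring.
  by rewrite ?oppr_eq0 ?mulf_neq0 ?oppr_eq0.
- apply: pt_neq_x; apply: (@neq_by _ _ _ (- 2%:R * (xi + 1))); last by ring.
  by rewrite ?oppr_eq0 ?mulf_neq0 ?oppr_eq0.
- apply: pt_neq_x; apply: (@neq_by _ _ _ (- (2%:R * 2%:R))); last by ring.
  by rewrite ?oppr_eq0 ?mulf_neq0 ?oppr_eq0.
- apply: pt_neq_y; apply: (@neq_by _ _ _ (2%:R * (2%:R * xi))); last by ring.
  by rewrite ?oppr_eq0 ?mulf_neq0 ?oppr_eq0.
- apply: pt_neq_x; apply: (@neq_by _ _ _ (- (2%:R * (2%:R * xi)))); last by ring.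
  by rewrite ?oppr_eq0 ?mulf_neq0 ?oppr_eq0.
- apply: pt_neq_x; apply: (@neq_by _ _ _ (- (2%:R * (xi + 1)))); last by ring.
  by rewrite ?oppr_eq0 ?mulf_neq0 ?oppr_eq0.
- apply: pt_neq_y; apply: (@neq_by _ _ _ (2%:R * (2%:R * xi))); last by ring.
  by rewrite ?oppr_eq0 ?mulf_neq0 ?oppr_eq0.
- apply: pt_neq_x; apply: (@neq_by _ _ _ (2%:R * (xi - 1))); last by ring.
  by rewrite ?oppr_eq0 ?mulf_neq0 ?oppr_eq0.
- apply: pt_neq_y; apply: (@neq_by _ _ _ (2%:R * (2%:R * xi))); last by ring.
  by rewrite ?oppr_eq0 ?mulf_neq0 ?oppr_eq0.
- apply: pt_neq_y; apply: (@neq_by _ _ _ (2%:R * (2%:R * xi))); last by ring.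
  by rewrite ?oppr_eq0 ?mulf_neq0 ?oppr_eq0.
Qed.
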